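(* Let $k$ be a field of characteristic zero, let $S$ be the first Weyl algebra over $k$, generated by $x,y$ subject to $yx-xy=1$, let $R=k[x]\subseteq S$, and let $f$ be the inclusion. Then the correspondence $\mathbf r\colon\operatorname{Spec} S\to\operatorname{Spec} R$ is a single-valued continuous function, but $\lambda$ is not a left adjoint to $\rho$.
   Context: $\operatorname{Spec}$ carries the Zariski topology, closed sets $V_A(X)=\{P\in\operatorname{Spec} A:P\supseteq X\}$; for $U\subseteq\operatorname{Spec} A$, $I(U)$ is the intersection of the primes in $U$. For $P\in\operatorname{Spec} S$, $\mathbf rP$ is the set of primes of $R$ minimal over $P\cap R$; $\mathbf r$ is continuous if $\{P:\mathbf rP\subseteq V\}$ is closed for every closed $V\subseteq\operatorname{Spec} R$. For an ideal $I$ of $R$, $I^S=\operatorname{ann}_S(S/SI)$. The functor $\lambda$ sends a closed $V\subseteq\operatorname{Spec} S$ to $V_R(I(V)\cap R)$; the functor $\rho$ sends a closed $V\subseteq\operatorname{Spec} R$ to $V_S(I(V)^S)$. ''$\lambda$ is a left adjoint to $\rho$'' means $\lambda U\subseteq V\iff U\subseteq\rho V$ for all closed $U\subseteq\operatorname{Spec} S$, $V\subseteq\operatorname{Spec} R$. *)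

(* Defs.v *)
From HB Require Import structures.
From mathcomp Require Import all_boot all_order all_algebra.
Set Implicit Arguments. Unset Strict Implicit. Unset Printing Implicit Defensive.
Import GRing.Theory.
Local Open Scope ring_scope.

(* Subsets of a ring are Prop-valued predicates; points of Spec A are
   prime (two-sided) ideals, sets of points are predicates on predicates. *)

Definition pset (T : Type) := T -> Prop.

Definition psubset (T : Type) (X Y : pset T) := forall a, X a -> Y a.

Section Ideals.
Variable A : pzRingType.

Definition is_ideal (I : pset A) : Prop :=
  [/\ I 0,
      (forall a b, I a -> I b -> I (a - b)),
      (forall r a, I a -> I (r * a)) &
      (forall r a, I a -> I (a * r))].

Definition is_prime (P : pset A) : Prop :=
  [/\ is_ideal P, ~ P 1 &
      forall I J : pset A, is_ideal I -> is_ideal J ->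
        (forall a b, I a -> J b -> P (a * b)) ->
        psubset I P \/ psubset J P].

Definition VZ (X : pset A) : pset (pset A) :=
  fun P => is_prime P /\ psubset X P.

Definition zclosed (U : pset (pset A)) : Prop :=
  exists X : pset A, forall P, U P <-> VZ X P.

Definition IZ (U : pset (pset A)) : pset A :=
  fun a => forall P, U P -> P a.

End Ideals.

Section Correspondence.
Variables (R S : pzRingType) (f : R -> S).

Definition contr (P : pset S) : pset R := fun a => P (f a).

Definition rcorr (P : pset S) : pset (pset R) :=
  fun Q => [/\ is_prime Q, psubset (contr P) Q &
    forall Q', is_prime Q' -> psubset (contr P) Q' -> psubset Q' Q ->
      psubset Q Q'].

Definition same_set (T : Type) (X Y : pset T) := forall a, X a <-> Y a.

Definition rcorr_single_valued : Prop :=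
  forall P, is_prime P ->
    exists Q, rcorr P Q /\ forall Q', rcorr P Q' -> same_set Q' Q.

Definition rcorr_continuous : Prop :=
  forall V : pset (pset R), zclosed V ->
    zclosed (fun P : pset S => is_prime P /\ psubset (rcorr P) V).

Definition SI (I : pset R) : pset S :=
  fun z => exists n (s : 'I_n -> S) (i : 'I_n -> R),
    (forall j, I (i j)) /\ z = \sum_(j < n) s j * f (i j).

(* I^S = ann_S (S / S I) *)
Definition extS (I : pset R) : pset S :=
  fun s => forall t, SI I (s * t).

Definition lambdaF (U : pset (pset S)) : pset (pset R) := VZ (contr (IZ U)).

Definition rhoF (V : pset (pset R)) : pset (pset S) := VZ (extS (IZ V)).

Definition lambda_left_adjoint_rho : Prop :=
  forall (U : pset (pset S)) (V : pset (pset R)), zclosed U -> zclosed V ->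
    (psubset (lambdaF U) V <-> psubset U (rhoF V)).

End Correspondence.

Definition is_weyl_algebra (k : fieldType) (S : algType k) (x y : S) : Prop :=
  y * x - x * y = 1 /\
  forall (B : algType k) (a b : B), b * a - a * b = 1 ->
    (exists phi : S -> B,
       [/\ phi 1 = 1,
           (forall s t, phi (s + t) = phi s + phi t),
           (forall (c : k) s, phi (c *: s) = c *: phi s),
           (forall s t, phi (s * t) = phi s * phi t) &
           phi x = a /\ phi y = b]) /\
    (forall phi psi : S -> B,
       phi 1 = 1 -> (forall s t, phi (s + t) = phi s + phi t) ->
       (forall (c : k) s, phi (c *: s) = c *: phi s) ->
       (forall s t, phi (s * t) = phi s * phi t) -> phi x = a -> phi y = b ->
       psi 1 = 1 -> (forall s t, psi (s + t) = psi s + psi t) ->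
       (forall (c : k) s, psi (c *: s) = c *: psi s) ->
       (forall s t, psi (s * t) = psi s * psi t) -> psi x = a -> psi y = b ->
       forall s, phi s = psi s).

(* Main.v *)
Require Import Defs.
From HB Require Import structures.
From mathcomp Require Import all_boot all_order all_algebra.
From mathcomp Require Import boolp classical_sets.
From Stdlib Require Import Classical.
Import GRing.Theory.
Local Open Scope ring_scope.
Set Implicit Arguments. Unset Strict Implicit.

Section LEnd.
Variable k : fieldType.

Record lend := LEnd { lfun :> {poly k} -> {poly k};
  lfunP : forall c u v, lfun (c *: u + v) = c *: lfun u + lfun v }.

HB.instance Definition _ := gen_eqMixin lend.
HB.instance Definition _ := gen_choiceMixin lend.

Lemma lend_ext (A B : lend) : (forall u, A u = B u) -> A = B.
Proof.
case: A B => [a ha] [b hb] /= H; have e := funext H; subst.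
by congr LEnd; apply: Prop_irrelevance.
Qed.

Lemma lf0 (A : lend) : A 0 = 0.
Proof. have h := lfunP A 1 0 0; rewrite !scale1r addr0 in h. by apply: (addrI (A 0)); rewrite addr0 -h. Qed.
Lemma lfD (A : lend) u v : A (u + v) = A u + A v.
Proof. by have := lfunP A 1 u v; rewrite !scale1r. Qed.
Lemma lfZ (A : lend) c u : A (c *: u) = c *: A u.
Proof. by have := lfunP A c u 0; rewrite !addr0 lf0 addr0. Qed.

Program Definition lzero : lend := @LEnd (fun _ => 0) _.
Next Obligation. by rewrite scaler0 addr0. Qed.
Program Definition ladd (A B : lend) : lend := @LEnd (fun u => A u + B u) _.
Next Obligation. by rewrite !lfunP scalerDr addrACA. Qed.
Program Definition lopp (A : lend) : lend := @LEnd (fun u => - A u) _.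
Next Obligation. by rewrite lfunP opprD scalerN. Qed.
Program Definition lone : lend := @LEnd (fun u => u) _.
Program Definition lmul (A B : lend) : lend := @LEnd (fun u => A (B u)) _.
Next Obligation. by rewrite !lfunP. Qed.
Program Definition lscale (a : k) (A : lend) : lend := @LEnd (fun u => a *: A u) _.
Next Obligation. by rewrite lfunP scalerDr !scalerA mulrC. Qed.

Lemma laddA : associative ladd.
Proof. by move=> A B C; apply: lend_ext => u /=; rewrite addrA. Qed.
Lemma laddC : commutative ladd.
Proof. by move=> A B; apply: lend_ext => u /=; rewrite addrC. Qed.
Lemma ladd0 : left_id lzero ladd.
Proof. by move=> A; apply: lend_ext => u /=; rewrite add0r. Qed.
Lemma laddN : left_inverse lzero lopp ladd.
Proof. by move=> A; apply: lend_ext => u /=; rewrite addNr. Qed.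
HB.instance Definition _ := GRing.isZmodule.Build lend laddA laddC ladd0 laddN.

Lemma lmulA : associative lmul.
Proof. by move=> A B C; apply: lend_ext. Qed.
Lemma lmul1 : left_id lone lmul.
Proof. by move=> A; apply: lend_ext. Qed.
Lemma lmul1r : right_id lone lmul.
Proof. by move=> A; apply: lend_ext. Qed.
Lemma lmulDl : left_distributive lmul (@GRing.add lend).
Proof. by move=> A B C; apply: lend_ext. Qed.
Lemma lmulDr : right_distributive lmul (@GRing.add lend).
Proof. by move=> A B C; apply: lend_ext => u /=; rewrite lfD. Qed.
Lemma lone0 : lone != 0.
Proof.
apply/eqP => /(congr1 (fun A : lend => lfun A 1)) /= /eqP.
by rewrite oner_eq0.
Qed.
HB.instance Definition _ := GRing.Zmodule_isNzRing.Build lend lmulA lmul1 lmul1r lmulDl lmulDr lone0.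

Lemma lscaleA a b (A : lend) : lscale a (lscale b A) = lscale (a * b) A.
Proof. by apply: lend_ext => u /=; rewrite scalerA. Qed.
Lemma lscale1 : left_id 1 lscale.
Proof. by move=> A; apply: lend_ext => u /=; rewrite scale1r. Qed.
Lemma lscaleDr : right_distributive lscale (@GRing.add lend).
Proof. by move=> a A B; apply: lend_ext => u /=; rewrite scalerDr. Qed.
Lemma lscaleDl (A : lend) : {morph lscale^~ A : a b / a + b}.
Proof. by move=> a b; apply: lend_ext => u /=; rewrite scalerDl. Qed.
HB.instance Definition _ := GRing.Zmodule_isLmodule.Build k lend lscaleA lscale1 lscaleDr lscaleDl.
Lemma lscaleAl (a : k) (A B : lend) : a *: (A * B) = (a *: A) * B.
Proof. by apply: lend_ext. Qed.
HB.instance Definition _ := GRing.Lmodule_isLalgebra.Build k lend lscaleAl.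
Lemma lscaleAr (a : k) (A B : lend) : a *: (A * B) = A * (a *: B).
Proof. by apply: lend_ext => u /=; rewrite lfZ. Qed.
HB.instance Definition _ := GRing.Lalgebra_isAlgebra.Build k lend lscaleAr.

Lemma lmulE (A B : lend) u : (A * B) u = A (B u). Proof. by []. Qed.
Lemma laddE (A B : lend) u : (A + B) u = A u + B u. Proof. by []. Qed.
Lemma loppE (A : lend) u : (- A) u = - A u. Proof. by []. Qed.
Lemma loneE u : (1 : lend) u = u. Proof. by []. Qed.
Lemma lzeroE u : (0 : lend) u = 0. Proof. by []. Qed.
Lemma lscaleE a (A : lend) u : (a *: A) u = a *: A u. Proof. by []. Qed.

Program Definition lD : lend := @LEnd (@deriv k) _.
Next Obligation. by rewrite derivD derivZ. Qed.
Program Definition lX : lend := @LEnd (fun u => 'X * u) _.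
Next Obligation. by rewrite mulrDr scalerAr. Qed.

Lemma lcomm : (- lX) * lD - lD * (- lX) = 1.
Proof.
apply: lend_ext => u /=.
by rewrite derivN derivM derivX mul1r opprK addrC addrK.
Qed.
End LEnd.
Section Rep.
Variables (k : fieldType) (S : algType k) (x y : S).
Hypothesis HW : is_weyl_algebra x y.
Let f : {poly k} -> S := horner_alg x.

Lemma fMXC' q c : f (q * 'X + c%:P) = f q * x + c%:A.
Proof. by rewrite /f rmorphD rmorphM /= horner_algX horner_algC. Qed.

Lemma not_unit_sum n (s : 'I_n -> S) (i : 'I_n -> {poly k}) :
  (forall j, (i j).[0] = 0) -> 1 <> \sum_(j < n) s j * f (i j).
Proof.
move=> Hi E.
have [[phi [phi1 phiD phiZ phiM [phix phiy]]] _] := HW.2 (lend k) (@lD k) (- @lX k) (@lcomm k).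
have phi0 : phi 0 = 0.
  by apply: (addrI (phi 0)); rewrite -phiD !addr0.
have phiS : forall m (F : 'I_m -> S), phi (\sum_(j < m) F j) = \sum_(j < m) phi (F j).
  by move=> m F; apply: (big_ind2 (fun a b => phi a = b)) => // a b c d <- <-; rewrite phiD.
have lS : forall m (G : 'I_m -> lend k) u, (\sum_(j < m) G j) u = \sum_(j < m) G j u.
  by move=> m G u; apply: (big_ind2 (fun (A : lend k) b => A u = b)) => // A b C d <- <-.
have pf : forall p, phi (f p) 1 = (p.[0])%:P.
  elim/poly_ind => [|q c IH].
    by rewrite /f rmorph0 phi0 horner0.
  rewrite fMXC' phiD phiM phiZ phi1 phix laddE lmulE lscaleE loneE /= hornerMXaddC.
  by rewrite -(polyC1) derivC lf0 add0r mulr0 add0r polyC1 -alg_polyC.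
have := congr1 (fun s => @lfun k (phi s) 1) E => /=.
rewrite phi1 loneE phiS lS big1 ?oner_eq0 //; last first.
  by move=> j _; rewrite phiM lmulE pf Hi lf0.
by move/eqP; rewrite oner_eq0.
Qed.
End Rep.
Section Weyl.
Variables (k : fieldType) (Hchar : [pchar k] =i pred0) (S : algType k) (x y : S).
Hypothesis Hxy : y * x - x * y = 1.
Let f : {poly k} -> S := horner_alg x.

Lemma fMXC q c : f (q * 'X + c%:P) = f q * x + c%:A.
Proof. by rewrite /f rmorphD rmorphM /= horner_algX horner_algC. Qed.

Lemma comm_f p : y * f p - f p * y = f p^`().
Proof.
elim/poly_ind: p => [|q c IH].
  by rewrite deriv0 /f !rmorph0 mulr0 mul0r subrr.
rewrite (derivMXaddC q c) fMXC /f rmorphD rmorphM /= horner_algX -/f -IH.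
rewrite mulrDr mulrDl mulr_algr mulr_algl opprD addrACA subrr addr0.
have e : y*(f q*x) - f q*x*y = (y*f q - f q*y)*x + f q*(y*x - x*y).
  by rewrite mulrBl mulrBr !mulrA addrA subrK.
by rewrite e Hxy mulr1 addrC.
Qed.

Lemma key (P : pset S) : is_ideal P -> ~ P 1 -> forall p, P (f p) -> p = 0.
Proof.
case=> P0 PB PL PR N1.
have PN : forall a, P a -> P (- a) by move=> a Pa; rewrite -sub0r; apply: PB.
have : forall n (p : {poly k}), (size p <= n)%N -> P (f p) -> p = 0.
  elim=> [|n IH] p sp Pp; first by apply/eqP; rewrite -size_poly_eq0 -leqn0.
  case: (leqP (size p) 1) => s1.
    rewrite [p]size1_polyC // in Pp *.
    apply/eqP; rewrite polyC_eq0; apply/negP => /negP c0; apply: N1.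
    have := PL ((p`_0)^-1)%:A _ Pp; rewrite /f horner_algC mulr_algl scalerA mulVf //.
    by rewrite scale1r.
  have p0 : p != 0 by rewrite -size_poly_eq0 -lt0n (ltn_trans _ s1).
  have d0 : p^`() = 0.
    apply: IH; first by rewrite -ltnS (leq_trans (lt_size_deriv p0) sp).
    by rewrite -comm_f; apply: PB; [apply: PL | apply: PR].
  exfalso; move: (congr1 (fun q : {poly k} => q`_(size p).-2) d0) => /=.
  have e : (size p).-2.+1 = (size p).-1 by case: (size p) s1 => [|[|m]].
  rewrite coef_deriv coef0 -mulr_natr e => /eqP.
  rewrite mulf_eq0 -lead_coefE lead_coef_eq0 (negbTE p0) /=.
  move/pcharf0P: Hchar => ->; by case: (size p) s1 => [|[|m]].
by move=> H p; apply: H.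
Qed.
End Weyl.
Local Open Scope classical_set_scope.
Section Max.
Variable A : pzRingType.

Lemma ideal0 (I : pset A) : is_ideal I -> I 0. Proof. by case. Qed.
Arguments ideal0 {I}.

Lemma sum_ideal (M I : pset A) : is_ideal M -> is_ideal I ->
  is_ideal (fun a => exists m i, [/\ M m, I i & a = m + i]).
Proof.
case=> M0 MB ML MR; case=> I0 IB IL IR; split.
- by exists 0, 0; rewrite addr0.
- move=> _ _ [m1 [i1 [H1 H2 ->]]] [m2 [i2 [H3 H4 ->]]].
  by exists (m1 - m2), (i1 - i2); split; [apply: MB|apply: IB|rewrite opprD addrACA].
- move=> r _ [m1 [i1 [H1 H2 ->]]].
  by exists (r * m1), (r * i1); split; [apply: ML|apply: IL|rewrite mulrDr].
- move=> r _ [m1 [i1 [H1 H2 ->]]].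
  by exists (m1 * r), (i1 * r); split; [apply: MR|apply: IR|rewrite mulrDl].
Qed.

Lemma maxideal (E : pset A) : is_ideal E -> ~ E 1 ->
  exists M, is_prime M /\ psubset E M.
Proof.
move=> IE NE.
pose PP (X : set A) := (forall a, ~ X a) \/ [/\ is_ideal X, psubset E X & ~ X 1].
have chain : forall F : set (set A), F `<=` PP -> total_on F subset ->
    PP (\bigcup_(X in F) X).
  move=> F FP Ftot.
  have idl : forall X, F X -> forall a, X a -> [/\ is_ideal X, psubset E X & ~ X 1].
    move=> X FX a Xa; case: (FP X FX) => // /(_ a); done.
  case: (classic (exists X, F X /\ exists a, X a)) => [[X0 [FX0 [a0 Xa0]]]|N]; last first.
    left=> a [X FX Xa]; apply: N; by exists X; split => //; exists a.
  have [[Z0 _ _ _] EX0 _] := idl X0 FX0 a0 Xa0.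
  right; split.
  - split.
    + by exists X0.
    + move=> a b [X1 F1 Xa] [X2 F2 Xb].
      have [[_ B1 _ _] _ _] := idl X1 F1 a Xa.
      have [[_ B2 _ _] _ _] := idl X2 F2 b Xb.
      case: (Ftot X1 X2 F1 F2) => S12.
        by exists X2 => //; apply: B2 => //; apply: S12.
      by exists X1 => //; apply: B1 => //; apply: S12.
    + move=> r a [X1 F1 Xa]; have [[_ _ L1 _] _ _] := idl X1 F1 a Xa.
      by exists X1 => //; apply: L1.
    + move=> r a [X1 F1 Xa]; have [[_ _ _ R1] _ _] := idl X1 F1 a Xa.
      by exists X1 => //; apply: R1.
  - by move=> a Ea; exists X0 => //; apply: EX0.
  - move=> [X1 F1 X11]; have [_ _ H] := idl X1 F1 1 X11; exact: (H X11).
have [M [PM Mmax]] := Zorn_bigcup chain.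
case: PM => [Memp|[IM EM NM]].
  exfalso; apply: (Mmax E); last by rewrite /PP; right; split => // a.
  split; first by move=> a /Memp.
  by move=> /(_ 0 (ideal0 IE)) /Memp.
have big : forall I, is_ideal I -> ~ psubset I M ->
    exists m i, [/\ M m, I i & 1 = m + i].
  move=> I II NIM; apply: NNPP => N.
  apply: (Mmax (fun a => exists m i, [/\ M m, I i & a = m + i])).
    split.
      by move=> a Ma; exists a, 0; rewrite addr0; split => //; apply: ideal0.
    move=> H; apply: NIM => a Ia; apply: H; exists 0, a; rewrite add0r; split => //.
    exact: ideal0.
  rewrite /PP; right; split.
  - exact: sum_ideal.
  - by move=> a Ea; exists a, 0; rewrite addr0; split => //; [apply: EM | apply: ideal0].
  - by move=> [m [i [H1 H2 H3]]]; apply: N; exists m, i.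
exists M; split => //; split => // I J II IJ HIJ.
case: (classic (psubset I M)) => [|NI]; first by left.
case: (classic (psubset J M)) => [|NJ]; first by right.
exfalso; apply: NM.
have [m [i [Mm Ii E1]]] := big I II NI.
have [m' [j [Mm' Jj E2]]] := big J IJ NJ.
have M0 := ideal0 IM.
case: IM => _ MB ML MR.
have MD : forall a b, M a -> M b -> M (a + b).
  move=> a b Ma Mb; rewrite -[b]opprK; apply: (MB) => //.
  by rewrite -sub0r; apply: (MB).
rewrite -[1]mulr1 {1}E1 E2 mulrDl !mulrDr.
apply: (MD); first by apply: (MD); [apply: (MR) | apply: (MR)].
by apply: (MD); [apply: (ML) | apply: HIJ].
Qed.
End Max.

Section Main.
Variables (k : fieldType) (Hchar : [pchar k] =i pred0) (S : algType k) (x y : S).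
Hypothesis HW : is_weyl_algebra x y.
Let f : {poly k} -> S := horner_alg x.

Definition Z0 : pset {poly k} := fun a => a = 0.
Definition Q0 : pset {poly k} := fun a => a.[0] = 0.

Lemma Z0_prime : is_prime Z0.
Proof.
split.
- split => [|a b -> ->|r a ->|r a ->]; rewrite /Z0 ?subrr ?mulr0 ?mul0r //.
- by move/eqP; rewrite oner_eq0.
- move=> I J _ _ HIJ.
  case: (classic (psubset I Z0)) => [|NI]; first by left.
  case: (classic (psubset J Z0)) => [|NJ]; first by right.
  exfalso; have [a Ia Na] : exists2 a, I a & a != 0.
    apply: NNPP => N; apply: NI => a Ia; apply/eqP; apply: NNPP => /negP Na.
    by apply: N; exists a.
  have [b Jb Nb] : exists2 b, J b & b != 0.
    apply: NNPP => N; apply: NJ => b Jb; apply/eqP; apply: NNPP => /negP Nb.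
    by apply: N; exists b.
  by move: (HIJ a b Ia Jb); rewrite /Z0 => /eqP; rewrite mulf_eq0 (negbTE Na) (negbTE Nb).
Qed.

Lemma Q0_prime : is_prime Q0.
Proof.
split.
- split => [|a b|r a|r a]; rewrite /Q0 ?horner0 ?hornerD ?hornerN ?hornerM //.
  + by move=> -> ->; rewrite subrr.
  + by move=> ->; rewrite mulr0.
  + by move=> ->; rewrite mul0r.
- by rewrite /Q0 hornerC => /eqP; rewrite oner_eq0.
- move=> I J _ _ HIJ.
  case: (classic (psubset I Q0)) => [|NI]; first by left.
  case: (classic (psubset J Q0)) => [|NJ]; first by right.
  exfalso; have [a Ia Na] : exists2 a, I a & a.[0] != 0.
    apply: NNPP => N; apply: NI => a Ia; apply/eqP; apply: NNPP => /negP Na.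
    by apply: N; exists a.
  have [b Jb Nb] : exists2 b, J b & b.[0] != 0.
    apply: NNPP => N; apply: NJ => b Jb; apply/eqP; apply: NNPP => /negP Nb.
    by apply: N; exists b.
  by move: (HIJ a b Ia Jb); rewrite /Q0 hornerM => /eqP; rewrite mulf_eq0 (negbTE Na) (negbTE Nb).
Qed.

Lemma contr0 (P : pset S) : is_prime P -> forall a, contr f P a <-> a = 0.
Proof.
case=> IP NP _ a; split; first exact: (key Hchar HW.1 IP NP).
by move=> ->; rewrite /contr /f rmorph0; case: IP.
Qed.

Lemma rcorrZ (P : pset S) : is_prime P -> rcorr f P Z0.
Proof.
move=> PP; split; first exact: Z0_prime.
- by move=> a /(contr0 PP).
- by move=> Q' [[Q'0 _ _ _] _ _] _ _ a ->.
Qed.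

Lemma rcorrU (P : pset S) Q : is_prime P -> rcorr f P Q -> Q = Z0.
Proof.
move=> PP [QP QC Qmin].
have sQZ : psubset Q Z0.
  apply: Qmin; first exact: Z0_prime.
    by move=> a /(contr0 PP).
  by move=> a ->; case: QP => [[]].
apply: funext => a; apply: propext; split; first exact: sQZ.
by move=> ->; case: QP => [[]].
Qed.

Lemma SI_sub (I : pset {poly k}) a b : SI f I a -> SI f I b -> SI f I (a - b).
Proof.
move=> [n1 [s1 [i1 [H1 ->]]]] [n2 [s2 [i2 [H2 ->]]]].
exists (n1 + n2)%N.
exists (fun j => match split j with inl a => s1 a | inr b => - s2 b end).
exists (fun j => match split j with inl a => i1 a | inr b => i2 b end).
split.
  by move=> j; case: (split j).
rewrite big_split_ord /=; congr (_ + _).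
  by apply: eq_bigr => j _; rewrite (unsplitK (inl j)).
rewrite -sumrN; apply: eq_bigr => j _; rewrite (unsplitK (inr j)) mulNr //.
Qed.

Lemma SI_mull (I : pset {poly k}) r a : SI f I a -> SI f I (r * a).
Proof.
move=> [n [s [i [H ->]]]]; exists n, (fun j => r * s j), i; split => //.
by rewrite mulr_sumr; apply: eq_bigr => j _; rewrite mulrA.
Qed.

Lemma SI_0 (I : pset {poly k}) : SI f I 0.
Proof. exists 0%N, (fun _ => 0), (fun _ => 0); split; first by case.
by rewrite big_ord0. Qed.

Lemma extS_ideal (I : pset {poly k}) : is_ideal (extS f I).
Proof.
split.
- by move=> t; rewrite mul0r; apply: SI_0.
- by move=> a b Ha Hb t; rewrite mulrBl; apply: SI_sub.
- by move=> r a Ha t; rewrite -mulrA; apply: SI_mull.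
- by move=> r a Ha t; rewrite -mulrA.
Qed.

Lemma main_parts :
  [/\ rcorr_single_valued f, rcorr_continuous f & ~ lambda_left_adjoint_rho f].
Proof.
split.
- move=> P PP; exists Z0; split; first exact: rcorrZ.
  by move=> Q' HQ; rewrite (rcorrU PP HQ) => a.
- move=> V _.
  case: (classic (V Z0)) => VZ0.
    exists (fun _ => False) => P; split.
      by case=> PP _; split.
    by case=> PP _; split => // Q HQ; rewrite (rcorrU PP HQ).
  exists (fun _ => True) => P; split.
    by case=> PP HP; exfalso; apply: VZ0; apply: HP; apply: rcorrZ.
  by case=> [[IP NP _] H]; exfalso; apply: NP; apply: H.
- move=> H.
  pose V := VZ (fun p : {poly k} => p = 'X).
  pose E := extS f (IZ V).
  have IE : is_ideal E by apply: extS_ideal.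
  have NE : ~ E 1.
    move=> /(_ 1); rewrite mulr1 => -[n [s [i [Hi E1]]]].
    apply: (not_unit_sum HW (s := s) (i := i)) => // j.
    by apply: (Hi j Q0); split; [exact: Q0_prime | move=> p ->; rewrite /Q0 hornerX].
  have [M [PM EM]] := maxideal IE NE.
  have zU : zclosed (VZ E) by exists E.
  have zV : zclosed V by exists (fun p : {poly k} => p = 'X).
  have L := (H (VZ E) V zU zV).2 (fun P h => h).
  have HZ : lambdaF f (VZ E) Z0.
    split; first exact: Z0_prime.
    by move=> a Ha; rewrite /Z0; apply/(contr0 PM); apply: Ha; split.
  have [_ /(_ 'X erefl)] := L Z0 HZ.
  by move/eqP; rewrite polyX_eq0.
Qed.
End Main.

Theorem mainTheorem13 (k : fieldType) (Hchar : [pchar k] =i pred0)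
  (S : algType k) (x y : S) (HW : is_weyl_algebra x y) :
  let f : {poly k} -> S := horner_alg x in
  [/\ rcorr_single_valued f,
      rcorr_continuous f &
      ~ lambda_left_adjoint_rho f].
Proof. exact: (main_parts Hchar HW). Qed.
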